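(* Let $v\in\mathbb{C}^{1,n}$. If $\alpha$ is a nodal root of the marked blowup $(S^v,Y^v,\phi^v)$, then $\alpha\cdot v=0$.
   Context: $\mathbb{Z}^{1,n}$ has basis $e_0,\dots,e_n$ with $e_0^2=1$, $e_i^2=-1$ ($i\ge1$), $e_i\cdot e_j=0$; $\mathbb{C}^{1,n}=\mathbb{Z}^{1,n}\otimes\mathbb{C}$. Positive roots $\Phi_n^+$: elements of the orbits of $\alpha_0=e_0-e_1-e_2-e_3$, $\alpha_i=e_i-e_{i+1}$ under the group $W_n$ generated by reflections $s_\alpha(x)=x+(x\cdot\alpha)\alpha$, which are nonnegative combinations of the $\alpha_i$. Construction: $X\subset\mathbf{P}^2$ is the cuspidal cubic $p(t)=[1:t:t^3]$; $t_0=(v\cdot e_0)/3$, $p_i=p(v\cdot e_i-t_0)$; $q_1,\dots,q_k$ the distinct $p_i$, $h_m=\#\{i:p_i=q_m\}$. $S^v$ is obtained by blowing up each $q_m$ and then successively the intersection point of the strict transform of $X$ with the newest exceptional curve, $h_m$ blowups over $q_m$. $Y^v$ is the strict transform of $X$. $\phi^v(e_0)$ is the class of a pulled-back line; if $\{i:p_i=q_m\}=\{i_1<\dots<i_{h_m}\}$, $\phi^v(e_{i_r})$ is the class of the total transform of the $r$-th exceptional curve over $q_m$. A nodal root is $\alpha\in\Phi_n^+$ with $\phi^v(\alpha)$ the class of an effective irreducible curve. *)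

(* Defs.v *)
From HB Require Import structures.
From mathcomp Require Import all_boot all_order all_algebra.
From mathcomp Require Import reals.
From mathcomp.real_closed Require Import complex.
From mathcomp.multinomials Require Import mpoly.
Set Implicit Arguments. Unset Strict Implicit. Unset Printing Implicit Defensive.
Import Order.TTheory GRing.Theory Num.Theory.
Local Open Scope ring_scope.

(* The lattice Z^{1,n}: vectors indexed by 'I_n.+1 (index 0 = e_0).    *)
Definition lat (n : nat) := {ffun 'I_n.+1 -> int}.

Definition evec (n : nat) (k : nat) : lat n :=
  [ffun j : 'I_n.+1 => ((j : nat) == k)%:Z].

Definition msign (n : nat) (i : 'I_n.+1) : int := if (i : nat) == 0%N then 1 else -1.

Definition mdot (n : nat) (x y : lat n) : int :=
  \sum_(i < n.+1) msign i * x i * y i.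

Definition mdotC (R : realType) (n : nat) (x : lat n) (v : 'I_n.+1 -> R[i]) : R[i] :=
  \sum_(i < n.+1) ((msign i * x i)%:~R) * v i.

Definition refl (n : nat) (a x : lat n) : lat n :=
  [ffun i => x i + mdot x a * a i].

Definition sroot (n : nat) (j : 'I_n) : lat n :=
  if (j : nat) == 0%N then
    [ffun i => evec n 0 i - evec n 1 i - evec n 2 i - evec n 3 i]
  else [ffun i => evec n j i - evec n j.+1 i].

(* W_n-orbit of the simple roots: apply a word of simple reflections *)
Definition apply_word (n : nat) (w : seq 'I_n) (x : lat n) : lat n :=
  foldr (fun j y => refl (sroot j) y) x w.

Definition in_simple_orbits (n : nat) (a : lat n) : Prop :=
  exists (w : seq 'I_n) (j : 'I_n), a = apply_word w (sroot j).

Definition nonneg_comb (n : nat) (a : lat n) : Prop :=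
  exists c : 'I_n -> int, (forall j, 0 <= c j) /\
    a = \sum_(j < n) [ffun i => c j * sroot j i].

Definition pos_root (n : nat) (a : lat n) : Prop :=
  in_simple_orbits a /\ nonneg_comb a.

(* X : y^3 = x^2 z, p(t) = [1:t:t^3];  t_0 = (v.e_0)/3 ;               *)
(* p_i = p(tau_i) with tau_i = v.e_i - t_0 = - v_i - v_0/3 (i >= 1).    *)
(* p is injective, so p_i = p_j iff tau_i = tau_j.                      *)
Section Construction.
Variables (R : realType) (n : nat) (v : 'I_n.+1 -> R[i]).

Definition tau (i : 'I_n.+1) : R[i] := - v i - v ord0 / 3%:R.

(* 0-based rank of i among the indices j >= 1 with p_j = p_i:
   e_i is sent by phi^v to the (rank0 i).+1 -th exceptional curve over p_i *)
Definition rank0 (i : 'I_n.+1) : nat :=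
  #|[set j : 'I_n.+1 | (0 < j)%N && (j < i)%N && (tau j == tau i)]|.
End Construction.

Definition u0 : 'I_2 := ord0.
Definition w1 : 'I_2 := ord_max.

Definition ord_at0 (C : ringType) (f : {mpoly C[2]}) : nat :=
  foldr minn (msize f) [seq mdeg m | m <- msupp f].

(* strict transform under the blowup of the origin, in the chart
   (u, w) |-> (u, u w) containing the strict transform of the curve w = 0:
   f(u, u w) / u^(ord f) *)
Definition blowup_step (C : ringType) (f : {mpoly C[2]}) : {mpoly C[2]} :=
  \sum_(m <- msupp f)
     f@_m *: ('X_u0 ^+ (mdeg m - ord_at0 f)%N * 'X_w1 ^+ (m w1)).

(* local equation near p(t) of the affine part F(1,y,z) of F, in the
   coordinates u = y - t, w = z - y^3 (in which X is {w = 0}) *)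
Definition local_eq (C : ringType) (F : {mpoly C[3]}) (t : C) : {mpoly C[2]} :=
  F \mPo [tuple 1; 'X_u0 + t%:MP; 'X_w1 + ('X_u0 + t%:MP) ^+ 3].

(* multiplicity of (the strict transform of) F at the (r+1)-th point
   infinitely near to p(t) along X (r = 0 : the point p(t) itself) *)
Definition inf_mult (C : ringType) (F : {mpoly C[3]}) (t : C) (r : nat) : nat :=
  ord_at0 (iter r (@blowup_step C) (local_eq F t)).

Definition irreducible_form (C : ringType) (F : {mpoly C[3]}) (d : nat) : Prop :=
  [/\ (0 < d)%N, F != 0, F \is ishomog1 d (@mdeg 3) &
      forall G H : {mpoly C[3]}, F = G * H -> (msize G <= 1)%N \/ (msize H <= 1)%N].

Section Nodal.
Variables (R : realType) (n : nat) (v : 'I_n.+1 -> R[i]).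

(* phi^v(a) is the class of the strict transform of an irreducible plane
   curve {F = 0} of degree d: d L - sum_i mult_{p_i, rank}(F) E_i *)
Definition curve_class (a : lat n) : Prop :=
  exists (F : {mpoly R[i][3]}) (d : nat), irreducible_form F d /\
    a = [ffun i : 'I_n.+1 => if (i : nat) == 0%N then (d : int)
                           else - ((inf_mult F (tau v i) (rank0 v i)) : int)].

(* phi^v(a) is the class of (the strict transform of) an exceptional curve:
   E_r - E_{r+1} over some q_m, or the last one E_{h_m} *)
Definition exc_class (a : lat n) : Prop :=
  (exists i j : 'I_n.+1, [/\ (0 < i)%N, (i < j)%N, tau v i = tau v j,
      (forall k : 'I_n.+1, (i < k)%N -> (k < j)%N -> tau v k != tau v i) &
      a = [ffun k => evec n i k - evec n j k]]) \/
  (exists i : 'I_n.+1, [/\ (0 < i)%N,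
      (forall k : 'I_n.+1, (i < k)%N -> tau v k != tau v i) &
      a = evec n i]).

Definition nodal_root (a : lat n) : Prop :=
  pos_root a /\ (curve_class a \/ exc_class a).
End Nodal.

(* Main.v *)
Require Import Defs.
From HB Require Import structures.
From mathcomp Require Import all_boot all_order all_algebra.
From mathcomp Require Import reals.
From mathcomp.real_closed Require Import complex.
From mathcomp.multinomials Require Import mpoly.
From mathcomp Require Import ring zify.
Import Order.TTheory GRing.Theory Num.Theory.
Local Open Scope ring_scope.
Set Implicit Arguments. Unset Strict Implicit.
Section Roots.
Variable n : nat.

Lemma sum_ev (k : nat) (hk : (k <= n)%N) (f : 'I_n.+1 -> int) :
  \sum_(i < n.+1) msign i * evec n k i * f i = msign (inord k : 'I_n.+1) * f (inord k).
Proof.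
rewrite (bigD1 (inord k)) //= ffunE inordK ?ltnS // eqxx mulr1 big1 ?addr0 //.
move=> i hi; rewrite ffunE; case: eqP => [e|]; last by rewrite mulr0 mul0r.
by case/negP: hi; apply/eqP/val_inj; rewrite /= inordK ?ltnS // e.
Qed.

Lemma mdot_sym (x y : lat n) : mdot x y = mdot y x.
Proof. by apply: eq_bigr => i _; rewrite mulrAC. Qed.

Lemma mdot_refl (a x y : lat n) : mdot (refl a x) y = mdot x y + mdot x a * mdot a y.
Proof.
rewrite /mdot /refl mulr_sumr -big_split /=; apply: eq_bigr => i _.
by rewrite ffunE; ring.
Qed.

Lemma refl_inv (a x y : lat n) : mdot a y = 0 -> mdot (refl a x) y = mdot x y.
Proof. by move=> h; rewrite mdot_refl h mulr0 addr0. Qed.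

Lemma refl_norm (a x : lat n) : mdot a a = -2 -> mdot (refl a x) (refl a x) = mdot x x.
Proof.
move=> h; rewrite mdot_refl (mdot_sym x) mdot_refl (mdot_sym a (refl a x)) mdot_refl h.
rewrite (mdot_sym a x); ring.
Qed.

Definition Kc : lat n := [ffun i : 'I_n.+1 => if (i : nat) == 0%N then -3 else 1].

Lemma msign_inord k : (k <= n)%N -> msign (inord k : 'I_n.+1) = if k == 0%N then 1 else -1.
Proof. by move=> hk; rewrite /msign inordK ?ltnS. Qed.

Lemma ev_inord k l : (l <= n)%N -> evec n k (inord l) = (l == k)%:Z.
Proof. by move=> hl; rewrite ffunE inordK ?ltnS. Qed.

Hypothesis hn : (3 <= n)%N.

Lemma sroot_inv (j : 'I_n) : mdot (sroot j) Kc = 0 /\ mdot (sroot j) (sroot j) = -2.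
Proof.
have h1 : (1 <= n)%N by apply: leq_trans hn.
have h2 : (2 <= n)%N by apply: leq_trans hn.
have h0 : (0 <= n)%N by [].
rewrite /mdot /sroot; case: ifP => hj.
  have E : forall y : lat n, \sum_(i < n.+1) msign i *
     [ffun i0 => evec n 0 i0 - evec n 1 i0 - evec n 2 i0 - evec n 3 i0] i * y i =
     msign (inord 0 : 'I_n.+1) * y (inord 0 : 'I_n.+1) - msign (inord 1 : 'I_n.+1) * y (inord 1 : 'I_n.+1)
     - msign (inord 2 : 'I_n.+1) * y (inord 2 : 'I_n.+1) - msign (inord 3 : 'I_n.+1) * y (inord 3 : 'I_n.+1).
    move=> y; rewrite (eq_bigr (fun i : 'I_n.+1 => msign i * evec n 0 i * y i - msign i * evec n 1 i * y i
       - msign i * evec n 2 i * y i - msign i * evec n 3 i * y i)); last by move=> i _; rewrite ffunE; ring.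
    by rewrite !sumrB !sum_ev.
  rewrite !E !ffunE !msign_inord // !inordK ?ltnS //= !ev_inord //=.
have hj1 : (j.+1 <= n)%N by [].
have hj0 : (j <= n)%N by apply: ltnW.
have E : forall y : lat n, \sum_(i < n.+1) msign i *
     [ffun i0 => evec n j i0 - evec n j.+1 i0] i * y i =
     msign (inord j : 'I_n.+1) * y (inord j : 'I_n.+1) - msign (inord j.+1 : 'I_n.+1) * y (inord j.+1 : 'I_n.+1).
  move=> y; rewrite (eq_bigr (fun i : 'I_n.+1 => msign i * evec n j i * y i - msign i * evec n j.+1 i * y i));
    last by move=> i _; rewrite ffunE; ring.
  by rewrite !sumrB !sum_ev.
rewrite !E !ffunE !msign_inord // !inordK ?ltnS // hj /= eqxx.
by rewrite (gtn_eqF (ltnSn j)) (ltn_eqF (ltnSn j)) eqxx.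
Qed.

Lemma pos_root_inv (a : lat n) : pos_root a -> mdot a Kc = 0 /\ mdot a a = -2.
Proof.
case=> [[w [j ->]] _]; elim: w => [|j' w [IH1 IH2]] /=; first exact: sroot_inv.
have [s1 s2] := sroot_inv j'.
by split; [rewrite refl_inv | rewrite refl_norm].
Qed.

End Roots.

Lemma mmap_morph (k : nat) (R0 : nzRingType) (S1 S2 : comNzRingType)
  (f1 : R0 -> S1) (f2 : R0 -> S2) (g : {rmorphism S1 -> S2}) (h : 'I_k -> S1)
  (p : {mpoly R0[k]}) :
  (forall c, g (f1 c) = f2 c) -> g (mmap f1 h p) = mmap f2 (fun i => g (h i)) p.
Proof.
move=> hf; rewrite /mmap rmorph_sum; apply: eq_bigr => m _.
rewrite rmorphM hf /mmap1 rmorph_prod; congr (_ * _); apply: eq_bigr => i _.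
by rewrite rmorphXn.
Qed.

Lemma foldr_minn_le (s : seq nat) b x : x \in s -> (foldr minn b s <= x)%N.
Proof.
elim: s => //= y s IH; rewrite inE => /orP [/eqP ->|/IH h]; first exact: geq_minl.
exact: leq_trans (geq_minr _ _) h.
Qed.

Section Chain.
Variable C : fieldType.

Definition hres (k : 'I_2) : {poly C} := if k == u0 then 'X else 0.
Definition res (f : {mpoly C[2]}) : {poly C} := mmap polyC hres f.

Lemma res_rmorph_test (f g : {mpoly C[2]}) : res (f * g) = res f * res g.
Proof. by rewrite /res rmorphM. Qed.

Lemma mmap1_2 (m : 'X_{1..2}) : mmap1 hres m = 'X ^+ (m u0) * 0 ^+ (m w1).
Proof.
rewrite /mmap1 big_ord_recr big_ord1 /= /hres /=.
by have -> : widen_ord (leqnSn 1) ord0 = u0 by apply: val_inj.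
Qed.

Lemma resX (i : 'I_2) : res 'X_i = hres i.
Proof. by rewrite /res mmapX mmap1U. Qed.

Lemma resZ c (p : {mpoly C[2]}) : res (c *: p) = c%:P * res p.
Proof. by rewrite /res mmapZ. Qed.
Lemma resM (p q : {mpoly C[2]}) : res (p * q) = res p * res q.
Proof. by rewrite /res rmorphM. Qed.
Lemma resXn (p : {mpoly C[2]}) k : res (p ^+ k) = res p ^+ k.
Proof. by rewrite /res rmorphXn. Qed.

Lemma res1 : res 1 = 1.
Proof. by rewrite /res rmorph1. Qed.
Lemma resD (p q : {mpoly C[2]}) : res (p + q) = res p + res q.
Proof. by rewrite /res rmorphD. Qed.
Lemma resC c : res c%:MP = c%:P.
Proof. by rewrite /res mmapC. Qed.

Lemma ord_le (f : {mpoly C[2]}) m : m \in msupp f -> (ord_at0 f <= mdeg m)%N.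
Proof. by move=> h; apply: foldr_minn_le; apply: map_f. Qed.

Lemma mdeg2 (m : 'X_{1..2}) : mdeg m = (m u0 + m w1)%N.
Proof.
rewrite mdegE big_ord_recr big_ord1 /=.
by have -> : widen_ord (leqnSn 1) ord0 = u0 by apply: val_inj.
Qed.

Lemma res_blowup (f : {mpoly C[2]}) :
  res f = 'X ^+ (ord_at0 f) * res (blowup_step f).
Proof.
rewrite /blowup_step /res raddf_sum mulr_sumr {1}/mmap.
apply: eq_big_seq => m hm.
rewrite /= -/(res _) resZ resM !resXn !resX /hres /= mmap1_2.
case: (posnP (m w1)) => [h0|hp].
  rewrite h0 !expr0 !mulr1 mulrCA -exprD subnKC ?mdeg2 ?h0 ?addn0 //.
  by have := ord_le hm; rewrite mdeg2 h0 addn0.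
have z : (0 : {poly C}) ^+ m w1 = 0 by rewrite expr0n (gtn_eqF hp).
by rewrite z !mulr0.
Qed.

Lemma res_iter (f : {mpoly C[2]}) h :
  res f = 'X ^+ (\sum_(r < h) ord_at0 (iter r (@blowup_step C) f)) *
          res (iter h (@blowup_step C) f).
Proof.
elim: h => [|h IH]; first by rewrite big_ord0 expr0 mul1r.
by rewrite IH big_ord_recr /= exprD -mulrA -res_blowup.
Qed.

End Chain.
Section PolC.
Variable C : fieldType.

Definition hP (k : 'I_3) : {poly C} :=
  if (k : nat) == 0%N then 1 else if (k : nat) == 1%N then 'X else 'X^3.
Definition Pol (F : {mpoly C[3]}) : {poly C} := mmap polyC hP F.

Lemma res_local (F : {mpoly C[3]}) t : res (local_eq F t) = Pol F \Po ('X + t%:P).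
Proof.
rewrite /local_eq /comp_mpoly /res.
rewrite (@mmap_morph _ _ _ _ _ polyC (mmap polyC (@hres C))); last by move=> c /=; rewrite mmapC.
rewrite /Pol (@mmap_morph _ _ _ _ _ polyC (comp_poly ('X + t%:P))); last by move=> c /=; rewrite comp_polyC.
apply: eq_bigr => m _; congr (_ * _); apply: mmap1_eq => i.
case: i => [[|[|[|//]]] hi]; rewrite (tnth_nth 0) /= /hP /= -/(res _).
- by rewrite comp_polyC res1.
- by rewrite comp_polyX resD resX resC.
- rewrite resD resXn resD !resX resC /hres /= add0r.
  by rewrite rmorphXn /= comp_polyX.
Qed.

Lemma chain_dvd (F : {mpoly C[3]}) t h :
  ('X - t%:P) ^+ (\sum_(r < h) inf_mult F t r) %| Pol F.
Proof.
have E := res_local F t; rewrite (res_iter _ h) in E.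
rewrite -(comp_polyXaddC_K (Pol F) t) -E comp_polyM rmorphXn /= comp_polyX.
exact: dvdp_mulIl.
Qed.

End PolC.
Definition i0 : 'I_3 := ord0.
Definition i1 : 'I_3 := @Ordinal 3 1 isT.
Definition i2 : 'I_3 := @Ordinal 3 2 isT.

Lemma prod3 (T : comNzRingType) (G : 'I_3 -> T) : \prod_(i < 3) G i = G i0 * G i1 * G i2.
Proof.
rewrite !big_ord_recr big_ord0 /= mul1r; congr (G _ * G _ * G _); exact: val_inj.
Qed.

Lemma mdeg3 (m : 'X_{1..3}) : mdeg m = (m i0 + m i1 + m i2)%N.
Proof.
rewrite mdegE !big_ord_recr big_ord0 /= add0n; congr (m _ + m _ + m _)%N; exact: val_inj.
Qed.

Lemma ord3_cases (i : 'I_3) : [\/ i = i0, i = i1 | i = i2].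
Proof.
case: i => [[|[|[|//]]] hi]; [apply: Or31|apply: Or32|apply: Or33]; exact: val_inj.
Qed.

Section PolHom.
Variable C : fieldType.

Lemma mmap1_hP (m : 'X_{1..3}) : mmap1 (@hP C) m = 'X^(m i1 + 3 * m i2).
Proof.
by rewrite /mmap1 prod3 /hP /= expr1n mul1r exprD exprM.
Qed.

Lemma Pol_coef (F : {mpoly C[3]}) k :
  (Pol F)`_k = \sum_(m <- msupp F) F@_m * ((m i1 + 3 * m i2)%N == k)%:R.
Proof.
rewrite /Pol /mmap coef_sum; apply: eq_bigr => m _.
by rewrite mmap1_hP coefCM coefXn eq_sym.
Qed.

Lemma Pol_size (F : {mpoly C[3]}) d : F \is d.-homog -> (size (Pol F) <= (3 * d).+1)%N.
Proof.
move=> /dhomogP hF; apply/leq_sizeP => j hj; rewrite Pol_coef big_seq big1 // => m hm.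
have hd : mdeg m = d := hF m hm; rewrite mdeg3 in hd.
suff -> : ((m i1 + 3 * m i2)%N == j) = false by rewrite mulr0.
apply/negbTE; rewrite neq_ltn; apply/orP; left; lia.
Qed.

Lemma Pol_top (F : {mpoly C[3]}) d : (0 < d)%N -> F \is d.-homog -> (Pol F)`_(3 * d).-1 = 0.
Proof.
move=> d0 /dhomogP hF; rewrite Pol_coef big_seq big1 // => m hm.
have hd : mdeg m = d := hF m hm; rewrite mdeg3 in hd.
suff -> : ((m i1 + 3 * m i2)%N == (3 * d).-1) = false by rewrite mulr0.
apply/negbTE/eqP; lia.
Qed.

End PolHom.
Section Factor.
Variable C : fieldType.

Definition Gc : {mpoly C[3]} := 'X_i1 ^+ 3 - 'X_i0 ^+ 2 * 'X_i2.

Definition phi (m : 'X_{1..3}) : 'X_{1..3} :=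
  [multinom (if (i : nat) == 0%N then (m i0 + 2 * (m i1 %/ 3))%N
             else if (i : nat) == 1%N then (m i1 %% 3)%N else (m i2 + m i1 %/ 3)%N) | i < 3].

Definition Hq (q : nat) : {mpoly C[3]} :=
  \sum_(k < q) ('X_i1 ^+ 3) ^+ (q.-1 - k) * ('X_i0 ^+ 2 * 'X_i2) ^+ k.

Definition Hf (F : {mpoly C[3]}) : {mpoly C[3]} :=
  \sum_(m <- msupp F) F@_m *: ('X_i0 ^+ m i0 * 'X_i1 ^+ (m i1 %% 3) * 'X_i2 ^+ m i2 * Hq (m i1 %/ 3)).

Definition Rf (F : {mpoly C[3]}) : {mpoly C[3]} :=
  \sum_(m <- msupp F) F@_m *: 'X_[phi m].

Lemma Xm3 (m : 'X_{1..3}) : 'X_[m] = 'X_i0 ^+ m i0 * 'X_i1 ^+ m i1 * 'X_i2 ^+ m i2 :> {mpoly C[3]}.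
Proof. by rewrite mpolyXE_id prod3. Qed.

Lemma phi0 m : phi m i0 = (m i0 + 2 * (m i1 %/ 3))%N. Proof. by rewrite /phi mnmE. Qed.
Lemma phi1 m : phi m i1 = (m i1 %% 3)%N. Proof. by rewrite /phi mnmE. Qed.
Lemma phi2 m : phi m i2 = (m i2 + m i1 %/ 3)%N. Proof. by rewrite /phi mnmE. Qed.

Lemma term_eq (m : 'X_{1..3}) :
  'X_[m] = Gc * ('X_i0 ^+ m i0 * 'X_i1 ^+ (m i1 %% 3) * 'X_i2 ^+ m i2 * Hq (m i1 %/ 3))
           + 'X_[phi m] :> {mpoly C[3]}.
Proof.
rewrite (Xm3 m) (Xm3 (phi m)) phi0 phi1 phi2.
set q := (m i1 %/ 3)%N; set r := (m i1 %% 3)%N.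
have HG : Gc * Hq q = ('X_i1 ^+ 3) ^+ q - ('X_i0 ^+ 2 * 'X_i2) ^+ q.
  by rewrite subrXX.
have e3 : ('X_i0 ^+ 2 * 'X_i2) ^+ q = ('X_i0 ^+ 2) ^+ q * 'X_i2 ^+ q :> {mpoly C[3]}.
  by rewrite exprMn.
have e1 : 'X_i1 ^+ m i1 = ('X_i1 ^+ 3) ^+ q * 'X_i1 ^+ r :> {mpoly C[3]}.
  by rewrite {1}(divn_eq (m i1) 3) exprD mulnC exprM.
have e0 : 'X_i0 ^+ (m i0 + 2 * q) = 'X_i0 ^+ m i0 * ('X_i0 ^+ 2) ^+ q :> {mpoly C[3]}.
  by rewrite exprD exprM.
have e2 : 'X_i2 ^+ (m i2 + q) = 'X_i2 ^+ m i2 * 'X_i2 ^+ q :> {mpoly C[3]}.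
  by rewrite exprD.
rewrite e1 e0 e2 [Gc * _]mulrCA HG e3.
move: ('X_i0 ^+ m i0) ('X_i1 ^+ r) ('X_i2 ^+ m i2) (('X_i1 ^+ 3) ^+ q)
  (('X_i0 ^+ 2) ^+ q) ('X_i2 ^+ q) => a b c x y z.
ring.
Qed.

Lemma F_decomp (F : {mpoly C[3]}) : F = Gc * Hf F + Rf F.
Proof.
rewrite /Hf /Rf mulr_sumr -big_split /=.
under eq_bigr do rewrite -scalerAr -scalerDr -term_eq.
exact: mpolyE.
Qed.

Lemma Rf_zero (F : {mpoly C[3]}) d : F \is d.-homog -> Pol F = 0 -> Rf F = 0.
Proof.
move=> /dhomogP hF hP0; apply/mpolyP => M; rewrite mcoeff0 /Rf raddf_sum /=.
have [hM|hM] := boolP ((M i1 < 3)%N && (mdeg M == d)).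
  have := congr1 (fun p : {poly C} => p`_(M i1 + 3 * M i2)) hP0.
  rewrite /= Pol_coef coef0 => EP; apply: (etrans _ EP); rewrite !big_seq; apply: eq_bigr => m hm.
  rewrite mcoeffZ mcoeffX; congr (_ * _%:R).
  have hd : mdeg m = d := hF m hm; rewrite mdeg3 in hd.
  move: hM; rewrite mdeg3 => /andP [h1 /eqP h2].
  case: (phi m =P M) => [/mnmP E|NE]; case: (_ =P _) => [E'|NE'] //.
    case: NE'; have E0 := E i0; have E1 := E i1; have E2 := E i2.
    rewrite phi0 phi1 phi2 in E0 E1 E2; lia.
  case: NE; apply/mnmP => i; case: (ord3_cases i) => ->; rewrite ?phi0 ?phi1 ?phi2; lia.
rewrite big_seq big1 // => m hm; rewrite mcoeffZ mcoeffX.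
suff -> : (phi m == M) = false by rewrite mulr0.
apply/negbTE/eqP => E; move: hM; rewrite -E mdeg3 phi0 phi1 phi2.
have hd : mdeg m = d := hF m hm; rewrite mdeg3 in hd.
apply/negP/negPn/andP; split; first by rewrite ltn_mod.
apply/eqP; lia.
Qed.

End Factor.
Arguments Gc {C}.

Section Irr.
Variable C : fieldType.

Lemma Gc_homog : (@Gc C) \is ishomog1 3 (@mdeg 3).
Proof.
have hX : forall i : 'I_3, ('X_i : {mpoly C[3]}) \is ishomog1 1 (@mdeg 3).
  by move=> i; rewrite dhomogX /= mdeg1.
rewrite /Gc rpredB //; first exact: (dhomogMn 3 (hX i1)).
exact: (dhomogM (dhomogMn 2 (hX i0)) (hX i2)).
Qed.

Lemma mevalXn' (v : 'I_3 -> C) (p : {mpoly C[3]}) k : (p ^+ k).@[v] = p.@[v] ^+ k.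
Proof. by elim: k => [|k IH]; rewrite ?expr0 ?meval1 // !exprS mevalM IH. Qed.

Lemma Gc_eval (v : 'I_3 -> C) : (@Gc C).@[v] = v i1 ^+ 3 - v i0 ^+ 2 * v i2.
Proof. by rewrite /Gc !exprS !expr0 mevalB !mevalM !mevalXU meval1. Qed.

Lemma irr_Pol0 (F : {mpoly C[3]}) d : irreducible_form F d -> Pol F = 0 ->
  exists c, [/\ c != 0, F = c *: Gc & d = 3%N].
Proof.
case=> d0 F0 hom irr hP0.
have FD := F_decomp F; rewrite (Rf_zero hom hP0) addr0 in FD.
case: (irr _ _ FD) => [hG|hH].
  have E := msize1_polyC hG.
  have e1 := congr1 (meval (fun i : 'I_3 => if i == i1 then 1 else 0)) E.
  have e0 := congr1 (meval (fun i : 'I_3 => 0)) E.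
  rewrite !mevalC !Gc_eval /= in e1 e0.
  move: e1; rewrite -e0 !mulr0 !subr0 expr1n exprS mul0r => /eqP.
  by rewrite oner_eq0.
have E := msize1_polyC hH; set c := (Hf F)@_0 in E.
have FE : F = c *: Gc by rewrite FD E mulrC mul_mpolyC.
have c0 : c != 0 by apply: contraNneq F0 => c0; rewrite FE c0 scale0r.
exists c; split => //.
have : F \is ishomog1 3 (@mdeg 3) by rewrite FE dhomogZ // Gc_homog.
exact: dhomog_uniq F0 hom.
Qed.

Lemma local_Gc (c t : C) : local_eq (c *: Gc) t = (- c) *: 'X_w1.
Proof.
rewrite /local_eq comp_mpolyZ /Gc !exprS !expr0 !mulr1 rmorphB /= !rmorphM /= !comp_mpolyXU /=.
rewrite -!mul_mpolyC.
move: ('X_u0 + t%:MP) ('X_w1 : {mpoly C[2]}) => a b.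
rewrite mpolyCN; ring.
Qed.

Lemma blowup_fix (c : C) : c != 0 -> blowup_step (c *: 'X_w1) = c *: 'X_w1 /\ ord_at0 (c *: 'X_w1) = 1%N.
Proof.
move=> c0; have hs := msuppMCX U_(w1) c0.
have ho : ord_at0 (c *: 'X_w1) = 1%N.
  rewrite /ord_at0 hs /= mdeg1; apply/minn_idPl.
  have hm : U_(w1)%MM \in msupp (c *: 'X_w1) by rewrite hs mem_seq1.
  exact: leq_trans _ (msize_mdeg_lt hm).
split => //; rewrite /blowup_step hs big_seq1 mcoeffZ mcoeffX eqxx mulr1 ho mdeg1.
by rewrite subnn expr0 mul1r mnm1E eqxx expr1.
Qed.

Lemma inf_mult_Gc (c t : C) r : c != 0 -> inf_mult (c *: Gc) t r = 1%N.
Proof.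
move=> c0; rewrite /inf_mult local_Gc.
have c0' : - c != 0 by rewrite oppr_eq0.
have [hb ho] := blowup_fix c0'.
suff -> : iter r (@blowup_step C) ((- c) *: 'X_w1) = (- c) *: 'X_w1 by [].
by elim: r => //= r ->.
Qed.

End Irr.

Lemma sub_perm (T : eqType) (L rs : seq T) :
  (forall z, count_mem z L <= count_mem z rs)%N -> (size rs <= size L)%N -> perm_eq L rs.
Proof.
elim: L rs => [|x L IH] rs hc hs.
  by move: hs; rewrite leqn0 => /nilP ->.
have hx : x \in rs.
  by rewrite -has_pred1 has_count; apply: leq_trans (hc x); rewrite /= eqxx.
apply: (@perm_trans _ (x :: rem x rs)); last by rewrite perm_sym perm_to_rem.
rewrite perm_cons.
apply: IH => [z|]; last by rewrite size_rem //; move: hs => /=; lia.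
rewrite count_mem_rem; have := hc z; rewrite /= eq_sym; case: (z == x) => /=; lia.
Qed.

Section Alg.
Variable C : closedFieldType.

Lemma count_bound (c : C) (rs : seq C) z k : c != 0 ->
  ('X - z%:P) ^+ k %| c *: \prod_(w <- rs) ('X - w%:P) -> (k <= count_mem z rs)%N.
Proof.
move=> c0; elim: rs k => [|w rs IH] k /=.
  rewrite big_nil alg_polyC; case: k => // k h.
  have : ('X - z%:P) %| c%:P by apply: dvdp_trans h; apply: dvdp_exp.
  by rewrite dvdp_XsubCl rootC (negbTE c0).
rewrite big_cons scalerAr; case: (eqVneq w z) => [->|nwz] h.
  case: k h => [|k] h //; rewrite exprS dvdp_mul2l ?polyXsubC_eq0 // in h.
  by rewrite add1n ltnS; exact: IH.
rewrite Gauss_dvdpr in h; last first.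
  by apply: coprimep_expl; apply: coprimep_XsubC2; rewrite subr_eq0.
by rewrite add0n; exact: IH.
Qed.

Lemma main_alg (P : {poly C}) (d : nat) (L : seq C) : P != 0 -> (0 < d)%N ->
  (size P <= (3 * d).+1)%N -> P`_(3 * d).-1 = 0 -> size L = (3 * d)%N ->
  (forall z, ('X - z%:P) ^+ (count_mem z L) %| P) -> \sum_(w <- L) w = 0.
Proof.
move=> P0 d0 hsz htop hL hdiv.
have [rs E] := closed_field_poly_normal P.
have c0 : lead_coef P != 0 by rewrite lead_coef_eq0.
have hsr : size P = (size rs).+1 by rewrite E size_scale // size_prod_XsubC.
have hp : perm_eq L rs.
  apply: sub_perm => [z|]; last by rewrite hL; move: hsz; rewrite hsr ltnS.
  by apply: (count_bound c0); rewrite -E.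
rewrite (perm_big _ hp) /=.
have hrs : size rs = (3 * d)%N by rewrite -(perm_size hp).
move: htop; rewrite E coefZ -hrs coefPn_prod_XsubC; last by rewrite hrs; lia.
move/eqP; rewrite mulf_eq0 (negbTE c0) /= oppr_eq0 => /eqP.
by [].
Qed.

End Alg.

Lemma rank_sum_k N (S : {set 'I_N}) (g : nat -> nat) k :
  (\sum_(i in S | (i < k)%N) g #|[set j in S | (j < i)%N]|)%N =
  (\sum_(r < #|[set j in S | (j < k)%N]|) g r)%N.
Proof.
elim: k => [|k IH].
  rewrite big1 // ?big_ord0 //.
    have -> : [set j in S | (j < 0)%N] = set0 by apply/setP => j; rewrite !inE ltn0 andbF.
    by rewrite cards0 big_ord0.
  by move=> i /andP [_]; rewrite ltn0.
case: (ltnP k N) => hk; last first.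
  have E1 : forall i : 'I_N, (i < k.+1)%N = (i < k)%N.
    by move=> i; have := ltn_ord i; lia.
  rewrite (eq_bigl (fun i => (i \in S) && (i < k)%N)); last by move=> i; rewrite E1.
  have -> : [set j in S | (j < k.+1)%N] = [set j in S | (j < k)%N].
    by apply/setP => j; rewrite !inE E1.
  exact: IH.
set o := Ordinal hk.
case hoS : (o \in S).
  rewrite (bigD1 o) /=; last by rewrite hoS ltnSn.
  rewrite (eq_bigl (fun i => (i \in S) && (i < k)%N)); last first.
    move=> i; rewrite -andbA; congr (_ && _).
    rewrite -val_eqE /= ltnS; case: ltngtP => //.
  have -> : [set j in S | (j < k.+1)%N] = o |: [set j in S | (j < k)%N].
    apply/setP => j; rewrite !inE; case: (eqVneq j o) => [->|njo] /=.
      by rewrite hoS ltnSn.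
    have njk : (j : nat) != k by rewrite -[k]/(o : nat) val_eqE.
    by rewrite ltnS leq_eqVlt (negbTE njk).
  rewrite cardsU1 !inE ltnn andbF /= add1n big_ord_recr /= IH addnC.
  done.
rewrite (eq_bigl (fun i => (i \in S) && (i < k)%N)); last first.
  move=> i /=; case: (eqVneq i o) => [->|nio]; first by rewrite hoS.
  have nik : (i : nat) != k by rewrite -[k]/(o : nat) val_eqE.
  by rewrite ltnS leq_eqVlt (negbTE nik).
have -> : [set j in S | (j < k.+1)%N] = [set j in S | (j < k)%N].
  apply/setP => j; rewrite !inE; case: (eqVneq j o) => [->|njo]; first by rewrite hoS.
  have njk : (j : nat) != k by rewrite -[k]/(o : nat) val_eqE.
  by rewrite ltnS leq_eqVlt (negbTE njk).
exact: IH.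
Qed.

Lemma rank_sum N (S : {set 'I_N}) (g : nat -> nat) :
  (\sum_(i in S) g #|[set j in S | (j < i)%N]|)%N = (\sum_(r < #|S|) g r)%N.
Proof.
have := rank_sum_k S g N.
rewrite (eq_bigl (fun i => i \in S)); last by move=> i; rewrite ltn_ord andbT.
have -> : [set j in S | (j < N)%N] = S by apply/setP => j; rewrite !inE ltn_ord andbT.
by [].
Qed.

Lemma sum_nseq (C : nzRingType) k (x : C) : \sum_(w <- nseq k x) w = x *+ k.
Proof. by elim: k => [|k IH]; rewrite ?big_nil //= big_cons IH mulrS. Qed.

Section Main.
Variables (R : realType) (n : nat) (v : 'I_n.+1 -> R[i]).

Lemma hi0 (i : 'I_n.+1) : i != ord0 -> ((i : nat) == 0%N) = false.
Proof. by apply: contraNF => /eqP h; apply/eqP/val_inj. Qed.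

Lemma mdotC_ev (i : 'I_n.+1) :
  \sum_(k < n.+1) ((msign k * evec n i k)%:~R : R[i]) * v k = (msign i)%:~R * v i.
Proof.
rewrite (bigD1 i) //= ffunE eqxx mulr1 big1 ?addr0 // => k hk.
rewrite ffunE; case: eqP => [e|_]; first by case/eqP: hk; apply: val_inj.
by rewrite mulr0 mul0r.
Qed.

Lemma exc1 (i j : 'I_n.+1) : (0 < i)%N -> (i < j)%N -> tau v i = tau v j ->
  mdotC [ffun k => evec n i k - evec n j k] v = 0.
Proof.
move=> i0 ij E; rewrite /mdotC.
under eq_bigr do rewrite ffunE mulrBr intrB mulrBl.
rewrite sumrB !mdotC_ev /msign (gtn_eqF i0) (gtn_eqF (leq_ltn_trans (leq0n i) ij)).
have Evij : v i = v j.
  move: E; rewrite /tau => /(congr1 (fun x => - (x + v ord0 / 3%:R))).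
  by rewrite !subrK !opprK.
by rewrite Evij subrr.
Qed.

Lemma exc2 (i : 'I_n.+1) : (0 < i)%N -> mdot (evec n i) (Kc n) != 0.
Proof.
move=> i0; rewrite /mdot sum_ev; last by rewrite -ltnS.
by rewrite inord_val /msign ffunE (gtn_eqF i0).
Qed.

End Main.

Lemma Posz_sum (I : Type) (r : seq I) (P : pred I) (f : I -> nat) :
  ((\sum_(i <- r | P i) f i)%N : int) = \sum_(i <- r | P i) (f i : int).
Proof. exact: (big_morph Posz PoszD). Qed.

Lemma sumn_map_filter (T : Type) (s : seq T) (P : pred T) (f : T -> nat) :
  sumn [seq f i | i <- [seq i <- s | P i]] = (\sum_(i <- s | P i) f i)%N.
Proof. by rewrite sumnE big_map big_filter. Qed.

Section Curve.
Variables (R : realType) (n : nat) (v : 'I_n.+1 -> R[i]).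

Lemma lt0_ord (j : 'I_n.+1) : (0 < j)%N = (j != ord0).
Proof. by rewrite lt0n -val_eqE. Qed.

Lemma curve_case (a : lat n) : curve_class v a -> mdot a (Kc n) = 0 -> mdot a a = -2 ->
  mdotC a v = 0.
Proof.
case=> F [d [irr Ea]] HK HN.
have [d0 F0 hom _] := irr.
set m := fun i : 'I_n.+1 => inf_mult F (tau v i) (rank0 v i).
have ai : forall i : 'I_n.+1, i != ord0 -> a i = - (m i : int).
  by move=> i hi; rewrite Ea ffunE hi0.
have a0 : a ord0 = d by rewrite Ea ffunE.
have h1 : (\sum_(i < n.+1 | i != ord0) m i)%N = (3 * d)%N.
  move: HK; rewrite /mdot (bigD1 ord0) //= a0 /Kc ffunE /=.
  rewrite (eq_bigr (fun i => (m i : int))); last first.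
    by move=> i hi; rewrite ai // ffunE /msign hi0 // mulr1 mulN1r opprK.
  rewrite -Posz_sum /msign /=; set s := (\sum_(i < n.+1 | i != ord0) m i)%N => H.
  have : (s : int) = (3 * d)%N.
    by move: H; rewrite mul1r mulrN addrC => /eqP; rewrite subr_eq0 => /eqP ->; rewrite PoszM mulrC.
  by case.
have h2 : (d * d + 2)%N = (\sum_(i < n.+1 | i != ord0) m i * m i)%N.
  move: HN; rewrite /mdot (bigD1 ord0) //= a0.
  rewrite (eq_bigr (fun i => - ((m i * m i)%N : int))); last first.
    by move=> i hi; rewrite ai // /msign hi0 // mulN1r opprK mulrN PoszM.
  rewrite sumrN -Posz_sum /msign /=; set s := (\sum_(i < n.+1 | i != ord0) m i * m i)%N => H.
  have : (s : int) = (d * d + 2)%N.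
    by move: H; rewrite mul1r => /eqP; rewrite subr_eq => /eqP E; rewrite PoszD PoszM E; ring.
  by case.
have [P0|P0] := eqVneq (Pol F) 0.
  have [c [c0 FE d3]] := irr_Pol0 irr P0.
  have m1 : forall i, m i = 1%N by move=> i; rewrite /m FE inf_mult_Gc.
  have : (\sum_(i < n.+1 | i != ord0) m i * m i)%N = (\sum_(i < n.+1 | i != ord0) m i)%N.
    by apply: eq_bigr => i _; rewrite m1.
  lia.
pose L := flatten [seq nseq (m i) (tau v i) | i <- [seq i <- index_enum 'I_n.+1 | i != ord0]].
have hsize : size L = (3 * d)%N.
  by rewrite size_flatten /shape -map_comp sumn_map_filter -h1; apply: eq_bigr => i _; rewrite /= size_nseq.
have hcount : forall z, count_mem z L = (\sum_(i < n.+1 | i != ord0) (tau v i == z) * m i)%N.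
  by move=> z; rewrite count_flatten -map_comp sumn_map_filter; apply: eq_bigr => i _; rewrite /= count_nseq.
have hsum : \sum_(w <- L) w = \sum_(i < n.+1 | i != ord0) tau v i *+ m i.
  rewrite big_flatten /= big_map big_filter; apply: eq_bigr => i _; exact: sum_nseq.
have hdiv : forall z, ('X - z%:P) ^+ (count_mem z L) %| Pol F.
  move=> z; rewrite hcount.
  pose S := [set j : 'I_n.+1 | (j != ord0) && (tau v j == z)].
  have -> : (\sum_(i < n.+1 | i != ord0) (tau v i == z) * m i)%N =
            (\sum_(i in S) inf_mult F z #|[set j in S | (j < i)%N]|)%N.
    rewrite (eq_bigr (fun i => if tau v i == z then m i else 0%N)); last first.
      by move=> i _; case: (tau v i == z); rewrite ?mul1n ?mul0n.
    rewrite -big_mkcondr; apply: eq_big => [i|i]; first by rewrite inE.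
    move=> /andP [hi /eqP hz]; rewrite /m /rank0 hz; congr (inf_mult _ _ _).
    apply: eq_card => j; rewrite !inE lt0_ord.
    by case: (j != ord0); case: (j < i)%N; case: (tau v j == z).
  rewrite rank_sum; exact: chain_dvd.
have HL := main_alg P0 d0 (Pol_size hom) (Pol_top d0 hom) hsize hdiv.
rewrite hsum in HL.
have key : \sum_(i < n.+1 | i != ord0) (m i)%:R * v i = - ((3 * d)%:R * (v ord0 / 3%:R)).
  move: HL.
  rewrite (eq_bigr (fun i => - ((m i)%:R * v i) - (m i)%:R * (v ord0 / 3%:R))); last first.
    by move=> i _; rewrite /tau -mulr_natl; ring.
  rewrite sumrB sumrN -mulr_suml -natr_sum h1 => /eqP; rewrite subr_eq0 => /eqP E.
  by rewrite -E opprK.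
rewrite /mdotC (bigD1 ord0) //= a0.
rewrite (eq_bigr (fun i => (m i)%:R * v i)); last first.
  by move=> i hi; rewrite ai // /msign hi0 // mulN1r opprK.
rewrite key /msign /= mul1r natrM.
have h3 : (3%:R : R[i]) != 0 by rewrite pnatr_eq0.
by field.
Qed.

End Curve.

Unset Implicit Arguments.

Theorem lemma6p6 (R : realType) (n : nat) (hn : (3 <= n)%N)
  (v : 'I_n.+1 -> R[i]) (a : lat n) :
  nodal_root v a -> mdotC a v = 0.
Proof.
case=> hpos hcl.
have [hK hN] := pos_root_inv hn hpos.
case: hcl => [hc|[[i [j [i0 ij E _ ->]]]|[i [i0 _ Ea]]]].
- exact: curve_case hc hK hN.
- exact: exc1 i0 ij E.
- by move: hK; rewrite Ea => hK; have := exc2 i0; rewrite hK eqxx.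
Qed.
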